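(* Let $\mathbf{C}$ be the Cantor set with a fixed compatible metric $\mathrm{dist}$, let $X \subset \mathbf{C}$, and let $f : X \to Y$ be a clopen-LC function from $X$ onto a separable metrizable space $Y$ such that $f^{-1}(y)$ is compact for every $y \in Y$. For $n = 1,2,\dots$, let $X_n$ be the union of all fibers $f^{-1}(y)$, $y \in Y$, for which there exist a sequence $y_k \to y$ in $Y$ with $y_k \neq y$ for all $k$ and $y_k \neq y_j$ for $k\ne j$, points $x_k \in f^{-1}(y_k)$, and a point $\tilde{x}_y \in \mathbf{C}$ with $x_k \to \tilde{x}_y$ and $\mathrm{dist}(\tilde{x}_y, f^{-1}(y)) > 1/n$; let $Y_n = f(X_n)$. Let $Y_0 = Y \setminus \bigcup_{n\ge 1} Y_n$ and $X_0 = f^{-1}(Y_0)$. Then $f|_{X_0} : X_0 \to Y_0$ is a closed function.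
   Context: All spaces are separable metrizable. A subset of a topological space is an LC-set if it is the intersection of an open set and a closed set. A function is closed if it maps closed sets to closed sets of its image space. A function $f : X \to Y$ is clopen-LC if for every subset $U \subset X$ that is clopen in $X$, the image $f(U)$ is an LC-set in $Y$. *)

(* Defs.v *)
From Stdlib Require Import Reals List.
Open Scope R_scope.

Definition is_metric {T : Type} (d : T -> T -> R) : Prop :=
  (forall x y, 0 <= d x y) /\
  (forall x y, d x y = 0 <-> x = y) /\
  (forall x y, d x y = d y x) /\
  (forall x y z, d x z <= d x y + d y z).

Definition m_open {T : Type} (d : T -> T -> R) (U : T -> Prop) : Prop :=
  forall x, U x -> exists r, 0 < r /\ forall z, d x z < r -> U z.

Definition m_closed {T : Type} (d : T -> T -> R) (C : T -> Prop) : Prop :=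
  m_open d (fun x => ~ C x).

Definition open_in {T : Type} (d : T -> T -> R) (S A : T -> Prop) : Prop :=
  (forall x, A x -> S x) /\
  exists V, m_open d V /\ forall x, A x <-> (V x /\ S x).

Definition closed_in {T : Type} (d : T -> T -> R) (S A : T -> Prop) : Prop :=
  (forall x, A x -> S x) /\
  exists C, m_closed d C /\ forall x, A x <-> (C x /\ S x).

Definition clopen_in {T : Type} (d : T -> T -> R) (S A : T -> Prop) : Prop :=
  open_in d S A /\ closed_in d S A.

Definition LC_set {T : Type} (d : T -> T -> R) (A : T -> Prop) : Prop :=
  exists O C, m_open d O /\ m_closed d C /\ forall x, A x <-> (O x /\ C x).

Definition image {T U : Type} (f : T -> U) (A : T -> Prop) : U -> Prop :=
  fun y => exists x, A x /\ f x = y.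

Definition m_compact {T : Type} (d : T -> T -> R) (K : T -> Prop) : Prop :=
  forall (I : Type) (U : I -> T -> Prop),
    (forall i, m_open d (U i)) ->
    (forall x, K x -> exists i, U i x) ->
    exists l : list I, forall x, K x -> exists i, In i l /\ U i x.

Definition separable {T : Type} (d : T -> T -> R) : Prop :=
  exists (D : T -> Prop) (e : T -> nat),
    (forall a b, D a -> D b -> e a = e b -> a = b) /\
    (forall x r, 0 < r -> exists z, D z /\ d x z < r).

Definition converges {T : Type} (d : T -> T -> R) (u : nat -> T) (l : T) : Prop :=
  forall eps, 0 < eps -> exists N, forall k, (N <= k)%nat -> d (u k) l < eps.

(** The Cantor set, as 2^N with the product topology *)
Definition Cantor := nat -> bool.

Definition product_open (U : Cantor -> Prop) : Prop :=
  forall x, U x -> exists n, forall z, (forall i, (i < n)%nat -> z i = x i) -> U z.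

Definition compatible_metric (dist : Cantor -> Cantor -> R) : Prop :=
  is_metric dist /\ forall U, m_open dist U <-> product_open U.

(** distance from a point to a set is > c  (inf over the set, literally unfolded:
    inf S > c  iff  some r > c is a lower bound of S) *)
Definition dist_set_gt {T : Type} (d : T -> T -> R) (p : T) (F : T -> Prop) (c : R) : Prop :=
  exists r, c < r /\ forall z, F z -> r <= d p z.

Definition fiber {T U : Type} (X : T -> Prop) (f : T -> U) (y : U) : T -> Prop :=
  fun x => X x /\ f x = y.

Definition bad_point {U : Type} (dist : Cantor -> Cantor -> R) (dY : U -> U -> R)
  (X : Cantor -> Prop) (f : Cantor -> U) (n : nat) (y : U) : Prop :=
  exists (yk : nat -> U) (xk : nat -> Cantor) (xt : Cantor),
    converges dY yk y /\
    (forall k, yk k <> y) /\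
    (forall k j, k <> j -> yk k <> yk j) /\
    (forall k, fiber X f (yk k) (xk k)) /\
    converges dist xk xt /\
    dist_set_gt dist xt (fiber X f y) (/ INR n).

Definition Xn {U : Type} dist (dY : U -> U -> R) X f (n : nat) : Cantor -> Prop :=
  fun x => exists y, bad_point dist dY X f n y /\ fiber X f y x.

Definition Yn {U : Type} dist (dY : U -> U -> R) X f (n : nat) : U -> Prop :=
  image f (Xn dist dY X f n).

Definition Y0 {U : Type} dist (dY : U -> U -> R) X f : U -> Prop :=
  fun y => ~ exists n, (1 <= n)%nat /\ Yn dist dY X f n y.

Definition X0 {U : Type} dist (dY : U -> U -> R) X f : Cantor -> Prop :=
  fun x => X x /\ Y0 dist dY X f (f x).

(* Main.v *)
Require Import Defs.
From Stdlib Require Import Reals List Lra Lia Classical ClassicalEpsilon.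
Open Scope R_scope.

Lemma ball_open {T : Type} (d : T -> T -> R) (Hd : is_metric d) x eps :
  m_open d (fun z => d x z < eps).
Proof.
  destruct Hd as [d0 [dz [ds dt]]].
  intros z Hz. exists (eps - d x z). split; [lra|].
  intros w Hw. pose proof (dt x z w). lra.
Qed.

Lemma gt_open {T : Type} (d : T -> T -> R) (Hd : is_metric d) p c :
  m_open d (fun z => c < d z p).
Proof.
  destruct Hd as [d0 [dz [ds dt]]].
  intros z Hz. exists (d z p - c). split; [lra|].
  intros w Hw. pose proof (dt z w p). lra.
Qed.

Lemma inv_S_pos n : 0 < / INR (S n).
Proof. apply Rinv_0_lt_compat, lt_0_INR; lia. Qed.

Lemma compact_closed_pt {T : Type} (d : T -> T -> R) (Hd : is_metric d) F p :
  m_compact d F -> ~ F p -> exists M : nat, forall z, F z -> / INR (S M) < d z p.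
Proof.
  intros HK Hp.
  destruct (HK nat (fun m z => / INR (S m) < d z p)) as [l Hl].
  - intros i. apply gt_open; auto.
  - intros z Hz. destruct Hd as [d0 [dz [ds dt]]].
    assert (0 < d z p).
    { destruct (Rle_lt_or_eq_dec 0 (d z p) (d0 z p)) as [h|h]; auto.
      exfalso. apply Hp. symmetry in h. apply dz in h. subst; auto. }
    destruct (archimed_cor1 _ H) as [N [HN1 HN2]].
    exists (N - 1)%nat. replace (S (N - 1)) with N by lia. auto.
  - exists (list_max l). intros z Hz. destruct (Hl z Hz) as [i [Hi Hu]].
    assert (Hle : (i <= list_max l)%nat).
    { pose proof (proj1 (list_max_le l (list_max l)) (le_n _)) as HF.
      rewrite Forall_forall in HF. auto. }
    eapply Rle_lt_trans; [|exact Hu].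
    apply Rinv_le_contravar. apply lt_0_INR; lia. apply le_INR; lia.
Qed.

Definition agree (n : nat) (x p : Cantor) : Prop := forall i, (i < n)%nat -> x i = p i.

Definition Qp (T : Cantor -> Prop) (w : Cantor -> R) (n : nat) (p : Cantor) : Prop :=
  forall r, 0 < r -> exists x, T x /\ w x < r /\ agree n x p.

Definition upd (p : Cantor) (n : nat) (b : bool) : Cantor :=
  fun i => if Nat.eqb i n then b else p i.

Lemma Qp_step T w n p : Qp T w n p ->
  Qp T w (S n) (upd p n false) \/ Qp T w (S n) (upd p n true).
Proof.
  intros HQ. destruct (classic (Qp T w (S n) (upd p n false))) as [h|h]; [left; auto|right].
  intros r hr.
  destruct (classic (exists x, T x /\ w x < r /\ agree (S n) x (upd p n true))) as [e|ne]; auto.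
  exfalso. apply h. intros r0 hr0.
  destruct (HQ (Rmin r r0) (Rmin_pos _ _ hr hr0)) as [x [Tx [wx ax]]].
  pose proof (Rmin_l r r0). pose proof (Rmin_r r r0).
  case_eq (x n); intro Hxn.
  - exfalso. apply ne. exists x. split; auto. split; [lra|].
    intros i hi. unfold upd. destruct (Nat.eqb_spec i n); subst; auto. apply ax; lia.
  - exists x. split; auto. split; [lra|].
    intros i hi. unfold upd. destruct (Nat.eqb_spec i n); subst; auto. apply ax; lia.
Qed.

Definition step T w (p : Cantor) (n : nat) : Cantor :=
  if excluded_middle_informative (Qp T w (S n) (upd p n false)) then upd p n false
  else upd p n true.

Fixpoint pre T w (n : nat) : Cantor :=
  match n with 0 => fun _ => false | S m => step T w (pre T w m) m end.

Lemma step_ne T w p n i : i <> n -> step T w p n i = p i.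
Proof.
  intros h. unfold step. destruct excluded_middle_informative; unfold upd;
  apply Nat.eqb_neq in h; rewrite h; auto.
Qed.

Lemma pre_stable T w n i : (i < n)%nat -> pre T w n i = pre T w (S i) i.
Proof.
  induction n; intros h; [lia|].
  destruct (Nat.eq_dec i n); [subst; auto|].
  simpl. rewrite step_ne by auto. apply IHn; lia.
Qed.

Lemma cantor_cluster (T : Cantor -> Prop) (w : Cantor -> R) :
  (forall r, 0 < r -> exists x, T x /\ w x < r) ->
  exists xt : Cantor, forall n, Qp T w n xt.
Proof.
  intros H.
  assert (Hpre : forall n, Qp T w n (pre T w n)).
  { induction n.
    - intros r hr. destruct (H r hr) as [x [? ?]]. exists x. repeat split; auto.
      intros i hi; lia.
    - simpl. unfold step. destruct excluded_middle_informative as [q|q]; auto.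
      destruct (Qp_step _ _ _ _ IHn); tauto. }
  exists (fun i => pre T w (S i) i). intros n r hr.
  destruct (Hpre n r hr) as [x [? [? ax]]]. exists x. repeat split; auto.
  intros i hi. rewrite ax by auto. apply pre_stable; auto.
Qed.

Fixpoint useq (g : nat -> R -> Cantor) (w : Cantor -> R) (k : nat) : Cantor :=
  match k with
  | 0 => g 0%nat 1
  | S k => g (S k) (Rmin (w (useq g w k)) (/ INR (S (S k))))
  end.

Lemma seq_build (T : Cantor -> Prop) (w : Cantor -> R)
  (Hpos : forall x, T x -> 0 < w x) (xt : Cantor) (P : forall n, Qp T w n xt) :
  exists u : nat -> Cantor, forall k,
    (T (u k) /\ w (u k) < / INR (S k) /\ agree k (u k) xt) /\ w (u (S k)) < w (u k).
Proof.
  assert (E : forall n r, exists x, 0 < r -> T x /\ w x < r /\ agree n x xt).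
  { intros n r. destruct (Rlt_dec 0 r) as [h|h].
    - destruct (P n r h) as [x Hx]. exists x; auto.
    - exists xt. intros; lra. }
  set (g := fun n r => proj1_sig (constructive_indefinite_description _ (E n r))).
  assert (Hg : forall n r, 0 < r -> T (g n r) /\ w (g n r) < r /\ agree n (g n r) xt).
  { intros n r hr. unfold g. destruct constructive_indefinite_description; simpl; auto. }
  assert (Inv : forall k, T (useq g w k) /\ w (useq g w k) < / INR (S k) /\ agree k (useq g w k) xt).
  { induction k.
    - simpl. rewrite Rinv_1. apply Hg; lra.
    - destruct IHk as [Tk _]. change (useq g w (S k)) with (g (S k) (Rmin (w (useq g w k)) (/ INR (S (S k))))).
      pose proof (Hpos _ Tk).
      pose proof (inv_S_pos (S k)).
      destruct (Hg (S k) _ (Rmin_pos _ _ H H0)) as [? [? ?]].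
      pose proof (Rmin_r (w (useq g w k)) (/ INR (S (S k)))). repeat split; auto. lra. }
  exists (useq g w). intros k. split; auto.
  destruct (Inv k) as [Tk _]. change (useq g w (S k)) with (g (S k) (Rmin (w (useq g w k)) (/ INR (S (S k))))).
  pose proof (Hpos _ Tk). pose proof (inv_S_pos (S k)).
  destruct (Hg (S k) _ (Rmin_pos _ _ H H0)) as [? [? ?]].
  pose proof (Rmin_l (w (useq g w k)) (/ INR (S (S k)))). lra.
Qed.

Theorem lemma2 (dist : Cantor -> Cantor -> R) (Hdist : compatible_metric dist)
  (X : Cantor -> Prop)
  (Y : Type) (dY : Y -> Y -> R) (HdY : is_metric dY) (Hsep : separable dY)
  (f : Cantor -> Y)
  (Hclopen_LC : forall U, clopen_in dist X U -> LC_set dY (image f U))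
  (Honto : forall y, exists x, X x /\ f x = y)
  (Hfib : forall y, m_compact dist (fiber X f y)) :
  forall A, closed_in dist (X0 dist dY X f) A ->
    closed_in dY (Y0 dist dY X f) (image f A).
Proof.
  intros A [HAX [C [HC HAC]]].
  destruct Hdist as [Hdm Hop].
  pose proof HdY as HdY'. destruct HdY' as [d0 [dz [ds dt]]].
  pose proof Hdm as Hdm'. destruct Hdm' as [e0 [ez [es et]]].
  split.
  { intros y [x [Ax fx]]. subst. apply (HAX x Ax). }
  exists (fun y => forall r, 0 < r -> exists x, A x /\ dY y (f x) < r).
  split.
  { intros y Hy. apply not_all_ex_not in Hy. destruct Hy as [r Hr].
    apply imply_to_and in Hr. destruct Hr as [hr Hr].
    exists (r / 2). split; [lra|]. intros z Hz Cz.
    destruct (Cz (r/2)) as [x [Ax Hx]]; [lra|].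
    apply Hr. exists x. split; auto. pose proof (dt y z (f x)). lra. }
  intros y. split.
  { intros [x [Ax fx]]. subst. split.
    - intros r hr. exists x. split; auto. rewrite (proj2 (dz _ _) eq_refl). auto.
    - apply (HAX x Ax). }
  intros [Cy Y0y].
  destruct (classic (forall r, 0 < r -> exists x, A x /\ 0 < dY y (f x) /\ dY y (f x) < r))
    as [Hacc|Hn].
  2:{ apply not_all_ex_not in Hn. destruct Hn as [r Hr].
      apply imply_to_and in Hr. destruct Hr as [hr Hr].
      destruct (Cy r hr) as [x [Ax Hx]].
      destruct (Rle_lt_or_eq_dec 0 _ (d0 y (f x))) as [h|h].
      - exfalso. apply Hr. exists x; auto.
      - symmetry in h. apply dz in h. exists x. auto. }
  set (T := fun x => A x /\ 0 < dY y (f x)).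
  set (w := fun x => dY y (f x)).
  destruct (cantor_cluster T w) as [xt Hxt].
  { intros r hr. destruct (Hacc r hr) as [x [? [? ?]]]. exists x. unfold T, w; auto. }
  destruct (seq_build T w) with (xt := xt) as [u Hu]; auto.
  { intros x [? ?]; auto. }
  assert (Hdec : forall k j, (k < j)%nat -> w (u j) < w (u k)).
  { intros k j hkj. induction hkj.
    - apply Hu.
    - pose proof (proj2 (Hu m)). lra. }
  assert (Hconv : converges dist u xt).
  { intros eps he.
    destruct (proj1 (Hop _) (ball_open dist Hdm xt eps) xt) as [n Hn].
    { rewrite (proj2 (ez _ _) eq_refl). auto. }
    exists n. intros k hk. rewrite es. apply Hn.
    intros i hi. apply (proj1 (Hu k)). lia. }
  assert (Tu : forall k, T (u k)) by (intro k; apply Hu).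
  assert (Hfxt : fiber X f y xt).
  { apply NNPP. intros Hnf.
    destruct (compact_closed_pt dist Hdm _ _ (Hfib y) Hnf) as [M HM].
    apply Y0y. exists (S (S M)). split; [lia|].
    destruct (Honto y) as [x0 [Xx0 fx0]].
    exists x0. split; auto. exists y. split; [|split; auto].
    exists (fun k => f (u k)), u, xt. split; [|split; [|split; [|split; [|split]]]].
    - intros eps he. destruct (archimed_cor1 _ he) as [N [HN1 HN2]].
      exists N. intros k hk. rewrite ds.
      destruct (Hu k) as [[_ [Hk _]] _].
      assert (/ INR (S k) <= / INR N).
      { apply Rinv_le_contravar. apply lt_0_INR; lia. apply le_INR; lia. }
      unfold w in Hk. lra.
    - intros k h. destruct (Tu k) as [_ hp]. rewrite h in hp.
      rewrite (proj2 (dz _ _) eq_refl) in hp. lra.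
    - intros k j hkj h.
      destruct (Nat.lt_total k j) as [l|[l|l]]; [| tauto |].
      + pose proof (Hdec _ _ l). unfold w in H. rewrite h in H. lra.
      + pose proof (Hdec _ _ l). unfold w in H. rewrite h in H. lra.
    - intros k. split; auto. destruct (Tu k) as [Ak _]. apply (HAX _ Ak).
    - exact Hconv.
    - exists (/ INR (S M)). split.
      + apply Rinv_lt_contravar. apply Rmult_lt_0_compat; apply lt_0_INR; lia.
        apply lt_INR; lia.
      + intros z Hz. rewrite es. left. apply HM; auto. }
  assert (HCxt : C xt).
  { apply NNPP. intros nC. destruct (HC xt nC) as [r [hr Hr]].
    destruct (Hconv r hr) as [N HN]. specialize (HN N (le_n _)).
    rewrite es in HN. apply (Hr _ HN).
    destruct (Tu N) as [AN _]. apply (proj1 (HAC _) AN). }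
  destruct Hfxt as [Xxt fxt].
  exists xt. split; auto. apply HAC. split; auto. split; auto. rewrite fxt; auto.
Qed.
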